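(* Let $\Phi=\varphi\land\bigwedge RE\land\bigwedge DI$ be an $\mathcal{ALCQIO}_{b,Re}$-formula over $\tau$ with $RE=\{\mathit{Reach}(B_1,S_1,A_1),\dots,\mathit{Reach}(B_h,S_h,A_h)\}$. Then $\mathrm{ORD}(\varphi)$ is non-empty iff there is a (finite) $\tau$-structure $\mathcal{M}$ with $\mathcal{M}\models\varphi$ that has an $h'$-useful labeling for every $1\le h'\le h$.
   Context: Structures are finite; $\tau$ has atomic concepts, atomic roles (a subset $\mathsf{N_F}$ functional, interpreted as partial functions) and nominals; $\tau$ contains all symbols of $\Phi$. $\mathcal{ALCQIO}_b$: concepts built from atomic concepts and nominals using $\sqcap,\sqcup,\neg,\exists r.C,\exists^{\le n}r.C$ for roles atomic or inverse; formulae are Boolean combinations of inclusions $C\sqsubseteq D$ and equalities; standard semantics. A reachability assertion $\mathit{Reach}(B,S,A)$ has atomic concepts $A,B$ and $S\subseteq\mathsf{N_F}$; an $\mathcal{ALCQIO}_{b,Re}$-formula is $\Phi=\varphi\land\bigwedge RE\land\bigwedge DI$ with $\varphi\in\mathcal{ALCQIO}_b$, $RE$ a finite set of reachability assertions, $DI$ a finite set of disjointness assertions $A_1\sqcap A_2\equiv\bot$, compatible (whenever two assertions of $RE$ share a role, their $A$-concepts are declared disjoint in $DI$). $D^{\mathcal{M}}_{h'}$ is the directed graph on vertex set $A_{h'}^{\mathcal{M}}$ with edges $\bigcup_{s\in S_{h'}}s^{\mathcal{M}}\cap(A_{h'}^{\mathcal{M}}\times A_{h'}^{\mathcal{M}})$.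 Types: $\mathrm{Con}(\varphi)$ is the set of concepts occurring in $\varphi$ (including subconcepts), $\mathrm{TYPES}_\varphi$ its power set, $\overline{tp}^{\varphi}_{\mathcal{M}}(u)=\{C\in\mathrm{Con}(\varphi)\mid u\in C^{\mathcal{M}}\}$. Given a finite set $L$ with a strict linear order $<$ of size $|\mathrm{TYPES}_\varphi|$ (by default $[1,|\mathrm{TYPES}_\varphi|]$ with the usual order), an $h'$-useful labeling for $\mathcal{M}$ (with values in $L$) is $f:A_{h'}^{\mathcal{M}}\to L$ such that (1) $f(u)=f(v)$ implies equal types, and (2) for every $u\in A_{h'}^{\mathcal{M}}$, either $u\in B_{h'}^{\mathcal{M}}$ or there are $v,w\in A_{h'}^{\mathcal{M}}$ with $f(u)=f(v)$, $f(w)<f(v)$ and $(w,v)$ an edge of $D^{\mathcal{M}}_{h'}$. $\mathrm{ORD}(\varphi)$: let $k=|\mathrm{TYPES}_\varphi|$ and extend $\tau$ to $\mathit{ext}(\tau)$ by a new atomic concept $M$, new nominals $o_1,\dots,o_k$, a new atomic role $\mathit{ord}$ and new functional roles $f_1,\dots,f_h$. For an $\mathit{ext}(\tau)$-structure $\mathcal{N}$ with universe $N$, let $\mathcal{M}$ be the substructure of $\mathcal{N}$ (restricted to $\tau$) with universe $M^{\mathcal{N}}$, and $O^{\mathcal{N}}=N\setminus M^{\mathcal{N}}$. Then $\mathcal{N}\in\mathrm{ORD}(\varphi)$ iff: (1) $\mathcal{M}\models\varphi$; (2) $N$ is partitioned into $M^{\mathcal{N}}$ and $O^{\mathcal{N}}=\{o_1^{\mathcal{N}},\dots,o_k^{\mathcal{N}}\}$;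 (3) $(o_i^{\mathcal{N}},o_j^{\mathcal{N}})\in\mathit{ord}^{\mathcal{N}}$ iff $i<j$; (4) for every $1\le h'\le h$, $f_{h'}^{\mathcal{N}}$ is a function from $A_{h'}^{\mathcal{M}}$ to $O^{\mathcal{N}}$; (5) for every $1\le h'\le h$, $f_{h'}^{\mathcal{N}}$ is an $h'$-useful labeling for $\mathcal{M}$ with values in $O^{\mathcal{N}}$ ordered by $\mathit{ord}^{\mathcal{N}}$. *)

(* Defs.v *)
From HB Require Import structures.
From mathcomp Require Import all_boot all_order.
Set Implicit Arguments. Unset Strict Implicit. Unset Printing Implicit Defensive.

(* ---------- Signatures and finite structures ----------
   A signature tau is given by types CN (atomic concepts), RN (atomic roles),
   NN (nominals) and a predicate fn : RN -> bool marking the functional roles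
   (the set N_F). *)
Record structure (CN RN NN : Type) (fn : RN -> bool) (D : finType) := Structure {
  cI : CN -> pred D;
  rI : RN -> rel D;
  nI : NN -> D;
  rI_fun : forall r, fn r -> forall x y z, rI r x y -> rI r x z -> y = z;
  dom_ne : 0 < #|D|
}.

Inductive concept (CN RN NN : Type) :=
| CAtom of CN
| CNom of NN
| CNot of concept CN RN NN
| CAnd of concept CN RN NN & concept CN RN NN
| COr of concept CN RN NN & concept CN RN NN
| CEx of RN & bool & concept CN RN NN          (* exists r.C ; bool = true: inverse role r^- *)
| CAtMost of nat & RN & bool & concept CN RN NN. (* exists^{<= n} r.C ; bool = inverse *)

Inductive formula (CN RN NN : Type) :=
| FSub of concept CN RN NN & concept CN RN NN
| FEqv of concept CN RN NN & concept CN RN NN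
| FNot of formula CN RN NN
| FAnd of formula CN RN NN & formula CN RN NN
| FOr of formula CN RN NN & formula CN RN NN.

Arguments CAtom {CN RN NN}. Arguments CNom {CN RN NN}.

Section Decidable.
Variables (CN RN NN : eqType).
Definition concept_eq_dec : comparable (concept CN RN NN).
Proof.
move=> x y; rewrite /decidable.
decide equality; exact: eq_comparable.
Defined.
End Decidable.
HB.instance Definition _ (CN RN NN : eqType) :=
  hasDecEq.Build (concept CN RN NN) (compareP (@concept_eq_dec CN RN NN)).

Section Semantics.
Variables (CN RN NN : Type) (fn : RN -> bool) (D : finType).
Variable M : structure CN NN fn D.

Definition roleI (r : RN) (inv : bool) : rel D :=
  fun x y => if inv then rI M r y x else rI M r x y.

Fixpoint sem (C : concept CN RN NN) : pred D :=
  fun x => match C with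
  | CAtom a => cI M a x
  | CNom o => x == nI M o
  | CNot C1 => ~~ sem C1 x
  | CAnd C1 C2 => sem C1 x && sem C2 x
  | COr C1 C2 => sem C1 x || sem C2 x
  | CEx r inv C1 => [exists y, roleI r inv x y && sem C1 y]
  | CAtMost n r inv C1 => #|[pred y | roleI r inv x y && sem C1 y]| <= n
  end.

Fixpoint sat (phi : formula CN RN NN) : Prop :=
  match phi with
  | FSub C1 C2 => forall x, sem C1 x -> sem C2 x
  | FEqv C1 C2 => forall x, sem C1 x = sem C2 x
  | FNot p => ~ sat p
  | FAnd p q => sat p /\ sat q
  | FOr p q => sat p \/ sat q
  end.
End Semantics.

Fixpoint subcon (CN RN NN : Type) (C : concept CN RN NN) : seq (concept CN RN NN) :=
  C :: match C with
       | CAtom _ | CNom _ => [::]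
       | CNot C1 => subcon C1
       | CAnd C1 C2 | COr C1 C2 => subcon C1 ++ subcon C2
       | CEx _ _ C1 | CAtMost _ _ _ C1 => subcon C1
       end.

Fixpoint Con (CN RN NN : Type) (phi : formula CN RN NN) : seq (concept CN RN NN) :=
  match phi with
  | FSub C1 C2 | FEqv C1 C2 => subcon C1 ++ subcon C2
  | FNot p => Con p
  | FAnd p q | FOr p q => Con p ++ Con q
  end.

(* |TYPES_phi| = |powerset of Con(phi)| *)
Definition ntypes (CN RN NN : eqType) (phi : formula CN RN NN) : nat :=
  2 ^ size (undup (Con phi)).

Definition same_type (CN RN NN : eqType) (fn : RN -> bool) (D : finType)
  (M : structure CN NN fn D) (phi : formula CN RN NN) (u v : D) : Prop :=
  forall C, C \in Con phi -> sem M C u = sem M C v.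

(* A labeling f with values in L
   (strictly ordered by lt) is only looked at on A^M. *)
Definition edgeD (CN RN NN : Type) (fn : RN -> bool) (D : finType)
  (M : structure CN NN fn D) (A : CN) (S : pred RN) (w v : D) : Prop :=
  [/\ cI M A w, cI M A v & exists2 s, S s & rI M s w v].

Definition useful (CN RN NN : eqType) (fn : RN -> bool) (D : finType)
  (M : structure CN NN fn D) (phi : formula CN RN NN)
  (A B : CN) (S : pred RN) (L : Type) (lt : L -> L -> Prop) (f : D -> L) : Prop :=
  (forall u v, cI M A u -> cI M A v -> f u = f v -> same_type M phi u v) /\
  (forall u, cI M A u ->
     cI M B u \/
     exists v w, [/\ cI M A v, cI M A w, f u = f v, lt (f w) (f v) & edgeD M A S w v]).

(* ---------- ALCQIO_{b,Re} formulae ----------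
   RE = {Reach(Bs i, Ss i, As i) | i < h}, DI = list of pairs (A1,A2) meaning A1 /\ A2 == bot. *)
Definition same_assertion (CN RN : Type) (h : nat) (Bs As : 'I_h -> CN)
  (Ss : 'I_h -> pred RN) (i j : 'I_h) : Prop :=
  [/\ Bs i = Bs j, As i = As j & Ss i =1 Ss j].

Definition is_ALCQIO_bRe (CN RN : eqType) (fn : RN -> bool) (h : nat)
  (Bs As : 'I_h -> CN) (Ss : 'I_h -> pred RN) (DI : seq (CN * CN)) : Prop :=
  (forall i r, Ss i r -> fn r) /\
  (forall i j, ~ same_assertion Bs As Ss i j ->
     (exists r, Ss i r /\ Ss j r) ->
     ((As i, As j) \in DI) || ((As j, As i) \in DI)).

(* ---------- ext(tau) and ORD(phi) ----------
   ext(tau): concepts  option CN  (None = the new concept M),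
             roles     RN + option 'I_h  (inr None = ord, inr (Some i) = f_(i+1)),
             nominals  NN + 'I_k  (inr i = o_(i+1)). *)
Definition ext_fn (RN : Type) (fn : RN -> bool) (h : nat) (r : RN + option 'I_h) : bool :=
  match r with
  | inl r0 => fn r0
  | inr None => false
  | inr (Some _) => true
  end.

Definition ext_structure (CN RN NN : Type) (fn : RN -> bool) (h k : nat) (Dn : finType) :=
  structure (option CN) (NN + 'I_k) (@ext_fn RN fn h) Dn.

Definition Muniv (CN RN NN : Type) (fn : RN -> bool) (h k : nat) (Dn : finType)
  (N : ext_structure CN NN fn h k Dn) : pred Dn := cI N None.

(* M is the tau-reduct of the substructure of N with universe M^N *)
Definition is_restriction (CN RN NN : Type) (fn : RN -> bool) (h k : nat) (Dn : finType)
  (N : ext_structure CN NN fn h k Dn)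
  (M : structure CN NN fn {x : Dn | Muniv N x}) : Prop :=
  [/\ (forall a (u : {x : Dn | Muniv N x}), cI M a u = cI N (Some a) (val u)),
      (forall r (u v : {x : Dn | Muniv N x}), rI M r u v = rI N (inl r) (val u) (val v))
    & (forall o, val (nI M o) = nI N (inl o))].
Arguments is_restriction {CN RN NN fn h k Dn} N M.

Definition ORD (CN RN NN : eqType) (fn : RN -> bool) (phi : formula CN RN NN)
  (h : nat) (Bs As : 'I_h -> CN) (Ss : 'I_h -> pred RN) (Dn : finType)
  (N : ext_structure CN NN fn h (ntypes phi) Dn) : Prop :=
  let k := ntypes phi in
  let o := fun i : 'I_k => nI N (inr i) in
  let ord := rI N (inr None) in
  let f := fun i : 'I_h => rI N (inr (Some i)) in
  exists M : structure CN NN fn {x : Dn | Muniv N x},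
  is_restriction N M /\
  [/\ sat M phi,
      (forall x, ~~ Muniv N x <-> exists i, x = o i),
      (forall i j : 'I_k, ord (o i) (o j) <-> i < j),
      (forall i : 'I_h,
         (forall u, cI M (As i) u -> exists y, f i (val u) y) /\
         (forall x y, f i x y ->
            (exists2 u, val u = x & cI M (As i) u) /\ ~~ Muniv N y))
    &
      (forall i : 'I_h, exists g : {x : Dn | Muniv N x} -> Dn,
         (forall u, cI M (As i) u -> f i (val u) (g u)) /\
         useful M phi (As i) (Bs i) (Ss i) (fun a b => ord a b) g)].
Arguments ORD {CN RN NN fn} phi {h} Bs As Ss {Dn} N.
Arguments useful {CN RN NN fn D} M phi A B S {L} lt f.

(* Main.v *)
Require Import Defs.
From HB Require Import structures.
From mathcomp Require Import all_boot all_order.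
Set Implicit Arguments. Unset Strict Implicit. Unset Printing Implicit Defensive.

Lemma card_bij (T1 T2 : finType) (p : T1 -> T2) (q : T2 -> T1) (P : pred T2) :
  cancel p q -> cancel q p -> #|[pred y | P (p y)]| = #|[pred y | P y]|.
Proof.
move=> pK qK; rewrite -(card_image (can_inj pK) [pred y | P (p y)]).
apply: eq_card => y; rewrite !inE; apply/imageP/idP.
  by case=> x; rewrite inE => Hx ->.
by move=> Hy; exists (q y); rewrite ?inE qK.
Qed.

Section Iso.
Variables (CN RN NN : Type) (fn : RN -> bool) (D1 D2 : finType).
Variables (M1 : structure CN NN fn D1) (M2 : structure CN NN fn D2).
Variables (p : D1 -> D2) (q : D2 -> D1).
Hypotheses (pK : cancel p q) (qK : cancel q p).
Hypothesis Hc : forall a x, cI M2 a (p x) = cI M1 a x.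
Hypothesis Hr : forall r x y, rI M2 r (p x) (p y) = rI M1 r x y.
Hypothesis Hn : forall o, nI M2 o = p (nI M1 o).

Lemma roleI_iso r inv x y : roleI M2 r inv (p x) (p y) = roleI M1 r inv x y.
Proof. by rewrite /roleI; case: inv; rewrite Hr. Qed.

Lemma sem_iso (C : concept CN RN NN) x : sem M2 C (p x) = sem M1 C x.
Proof.
elim: C x => [a|o|C IH|C1 IH1 C2 IH2|C1 IH1 C2 IH2|r inv C IH|n r inv C IH] x /=.
- exact: Hc.
- by rewrite Hn (inj_eq (can_inj pK)).
- by rewrite IH.
- by rewrite IH1 IH2.
- by rewrite IH1 IH2.
- apply/existsP/existsP => [[y /andP[H1 H2]]|[y /andP[H1 H2]]].
    exists (q y); rewrite -IH -roleI_iso qK; exact/andP.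
  by exists (p y); rewrite IH roleI_iso; apply/andP.
- rewrite -(card_bij (fun y => roleI M2 r inv (p x) y && sem M2 C y) pK qK).
  suff -> : #|[pred y | roleI M2 r inv (p x) (p y) && sem M2 C (p y)]| =
            #|[pred y | roleI M1 r inv x y && sem M1 C y]| by [].
  by apply: eq_card => y; rewrite !inE roleI_iso IH.
Qed.

Lemma sat_iso (phi : formula CN RN NN) : sat M2 phi <-> sat M1 phi.
Proof.
elim: phi => [C1 C2|C1 C2|f IH|f IHf g IHg|f IHf g IHg] /=.
- split=> H x.
    by rewrite -!sem_iso; apply: H.
  by rewrite -(qK x) !sem_iso; apply: H.
- split=> H x.
    by rewrite -!sem_iso; apply: H.
  by rewrite -(qK x) !sem_iso; apply: H.
- by case: IH => A B; split=> H1 H2; apply: H1; auto.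
- by case: IHf; case: IHg; split=> [[]|[]]; auto.
- by case: IHf; case: IHg; split=> [[]|[]]; auto.
Qed.
End Iso.

Section Build.
Variables (CN RN NN : eqType) (fn : RN -> bool) (k h : nat) (As : 'I_h -> CN).
Variables (D : finType) (M : structure CN NN fn D) (F : 'I_h -> D -> 'I_k).

Definition DnT : finType := (D + 'I_k)%type.

Definition cIN (a : option CN) (x : DnT) : bool :=
  match a, x with Some a, inl u => cI M a u | None, inl _ => true | _, _ => false end.

Definition rIN (r : RN + option 'I_h) (x y : DnT) : bool :=
  match r with
  | inl r => match x, y with inl u, inl v => rI M r u v | _, _ => false end
  | inr None => match x, y with inr a, inr b => a < b | _, _ => false end
  | inr (Some i) => match x, y with inl u, inr j => cI M (As i) u && (F i u == j)
                    | _, _ => false end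
  end.

Definition nIN (o : NN + 'I_k) : DnT :=
  match o with inl o => inl (nI M o) | inr j => inr j end.

Lemma rIN_fun r : @ext_fn RN fn h r -> forall x y z, rIN r x y -> rIN r x z -> y = z.
Proof.
case: r => [r|[i|]] //= Hr [x|x] [y|y] [z|z] //=.
- by move=> H1 H2; rewrite (rI_fun Hr H1 H2).
- by move=> /andP[_ /eqP <-] /andP[_ /eqP <-].
Qed.

Lemma DnT_ne : 0 < #|DnT|.
Proof.
have /card_gt0P [d _] := dom_ne M.
by apply/card_gt0P; exists (inl d).
Qed.

Definition NN0 : ext_structure CN NN fn h k DnT :=
  @Structure (option CN) (RN + option 'I_h) (NN + 'I_k) (@ext_fn RN fn h) DnT
    cIN rIN nIN rIN_fun DnT_ne.

Definition SubT : finType := {x : DnT | Muniv NN0 x}.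
Definition phiS (u : D) : SubT := exist _ (inl u) isT.

Lemma Msub_fun r : fn r -> forall x y z : SubT,
  rIN (inl r) (val x) (val y) -> rIN (inl r) (val x) (val z) -> y = z.
Proof.
move=> Hr x y z H1 H2; apply: val_inj; exact: (@rIN_fun (inl r) Hr _ _ _ H1 H2).
Qed.

Lemma SubT_ne : 0 < #|SubT|.
Proof.
have /card_gt0P [d _] := dom_ne M.
by apply/card_gt0P; exists (phiS d).
Qed.

Definition Msub : structure CN NN fn SubT :=
  @Structure CN RN NN fn SubT (fun a s => cIN (Some a) (val s))
    (fun r s t => rIN (inl r) (val s) (val t)) (fun o => phiS (nI M o)) Msub_fun SubT_ne.

Lemma phiS_surj (s : SubT) : exists u, s = phiS u.
Proof.
case: s => [[u|j] Hs] //; exists u; exact: val_inj.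
Qed.

Lemma phiS_inj : injective phiS.
Proof. by move=> u v /(congr1 val) [->]. Qed.

Lemma sem_Msub C u : sem Msub C (phiS u) = sem M C u.
Proof.
have /card_gt0P [d0 _] := dom_ne M.
pose psi (s : SubT) := match val s with inl u => u | inr _ => d0 end.
apply: (@sem_iso _ _ _ _ _ _ M Msub phiS psi) => //.
  by move=> s; case: (phiS_surj s) => v ->.
Qed.

Lemma sat_Msub phi : sat Msub phi <-> sat M phi.
Proof.
have /card_gt0P [d0 _] := dom_ne M.
pose psi (s : SubT) := match val s with inl u => u | inr _ => d0 end.
apply: (@sat_iso _ _ _ _ _ _ M Msub phiS psi) => //.
  by move=> s; case: (phiS_surj s) => v ->.
Qed.
End Build.

Lemma dir2 (CN RN NN : eqType) (fn : RN -> bool) (phi : formula CN RN NN)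
  (h : nat) (Bs As : 'I_h -> CN) (Ss : 'I_h -> pred RN) :
  (exists (D : finType) (M : structure CN NN fn D),
      sat M phi /\
      forall i : 'I_h, exists f : D -> 'I_(ntypes phi),
        useful M phi (As i) (Bs i) (Ss i) (fun a b : 'I_(ntypes phi) => a < b) f) ->
  (exists (Dn : finType) (N : ext_structure CN NN fn h (ntypes phi) Dn),
      ORD phi Bs As Ss N).
Proof.
move=> [D [M [Hsat HF]]].
have [F HFi] := fin_all_exists HF.
exists _, (NN0 As M F).
exists (Msub As M F); split; first by split.
split.
- exact/sat_Msub.
- case=> [x|j] /=; split=> //.
    by case.
  by move=> _; exists j.
- by [].
- move=> i; split.
    by move=> s; case: (phiS_surj s) => u -> /= Au; exists (inr (F i u)); rewrite /= Au eqxx.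
  case=> [u|j] [v|j'] //= /andP[Au _]; split=> //.
  by exists (phiS As M F u).
- move=> i; have /card_gt0P [d0 _] := dom_ne M.
  pose psi (s : SubT As M F) := match val s with inl u => u | inr _ => d0 end.
  exists (fun s => inr (F i (psi s))); split.
    by move=> s; case: (phiS_surj s) => u -> /= Au; rewrite Au eqxx.
  have [Hu1 Hu2] := HFi i.
  split.
    move=> s t; case: (phiS_surj s) => u ->; case: (phiS_surj t) => v -> /= Au Av Huv C HC.
    by rewrite !sem_Msub; apply: Hu1 => //; case: Huv.
  move=> s; case: (phiS_surj s) => u -> /= Au.
  case: (Hu2 u Au) => [HB|[v [w [Av Aw Huv Hwv [_ _ [r Hr Hrw]]]]]]; [by left|right].
  exists (phiS As M F v), (phiS As M F w); split=> //=.
  - by rewrite Huv.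
  - by split=> //; exists r.
Qed.

Lemma dir1 (CN RN NN : eqType) (fn : RN -> bool) (phi : formula CN RN NN)
  (h : nat) (Bs As : 'I_h -> CN) (Ss : 'I_h -> pred RN) :
  (exists (Dn : finType) (N : ext_structure CN NN fn h (ntypes phi) Dn),
      ORD phi Bs As Ss N) ->
  (exists (D : finType) (M : structure CN NN fn D),
      sat M phi /\
      forall i : 'I_h, exists f : D -> 'I_(ntypes phi),
        useful M phi (As i) (Bs i) (Ss i) (fun a b : 'I_(ntypes phi) => a < b) f).
Proof.
move=> [Dn [N [M [Hres [Hsat H2 H3 H4 H5]]]]].
exists {x : Dn | Muniv N x}, M; split=> // i.
have [g [Hg1 [Hu1 Hu2]]] := H5 i.
set o := fun j : 'I_(ntypes phi) => nI N (inr j).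
have oinj : forall a b, o a = o b -> a = b.
  move=> a b; rewrite /o => Hab; case: (ltngtP a b) => Hlt.
  - have := (H3 a b).2 Hlt; rewrite Hab => H; have := (H3 b b).1 H; by rewrite ltnn.
  - have := (H3 b a).2 Hlt; rewrite Hab => H; have := (H3 b b).1 H; by rewrite ltnn.
  - exact: val_inj.
have k0 : 0 < ntypes phi by rewrite /ntypes expn_gt0.
pose f u := odflt (Ordinal k0) [pick j | o j == g u].
have Hf : forall u, cI M (As i) u -> o (f u) = g u.
  move=> u Au; have := (H4 i).2 _ _ (Hg1 u Au) => -[_ /H2 [j Hj]].
  rewrite /f; case: pickP => [j' /eqP //|/(_ j)]; by rewrite Hj eqxx.
exists f; split.
  move=> u v Au Av Huv; apply: Hu1 => //; by rewrite -(Hf u) // -(Hf v) // Huv.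
move=> u Au; case: (Hu2 u Au) => [HB|[v [w [Av Aw Huv Hwv He]]]]; [by left|right].
exists v, w; split=> //.
  by apply: oinj; rewrite !Hf.
apply/(H3 _ _); move: (Hf w Aw) (Hf v Av); rewrite /o => -> ->; exact: Hwv.
Qed.

Unset Implicit Arguments. Set Strict Implicit.

Theorem lemma9 (CN RN NN : eqType) (fn : RN -> bool) (phi : formula CN RN NN)
  (h : nat) (Bs As : 'I_h -> CN) (Ss : 'I_h -> pred RN) (DI : seq (CN * CN))
  (HPhi : is_ALCQIO_bRe fn Bs As Ss DI) :
  (exists (Dn : finType) (N : ext_structure CN NN fn h (ntypes phi) Dn),
      ORD phi Bs As Ss N)
  <->
  (exists (D : finType) (M : structure CN NN fn D),
      sat M phi /\
      forall i : 'I_h, exists f : D -> 'I_(ntypes phi),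
        useful M phi (As i) (Bs i) (Ss i) (fun a b : 'I_(ntypes phi) => a < b) f).
Proof. split; [exact: dir1 | exact: dir2]. Qed.
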